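(* Let $\mathrm{ocDAG}$ be the set of all ordered connected directed acyclic graphs, and let $\mathrm{ocROUTING} = \{\mathrm{routing}(\vec{G})\}_{\vec{G}\in\mathrm{ocDAG}}$. The unitary router $$\mathrm{router}: \mathrm{ocDAG} \rightarrow \mathrm{ocROUTING},\qquad \vec{G}\mapsto \mathrm{routing}(\vec{G})$$ is a bijection.
   Context: A topological ordering of a directed graph $G=(V,E)$ is a bijection $o: V\to\{1,\dots,|V|\}$ such that for every directed edge $(v_j,v_k)\in E$ one has $o(v_j)<o(v_k)$; a directed graph is acyclic (a DAG) iff it admits a topological ordering. An ordered DAG is a DAG $(V,E)$ with $V=\{1,\dots,|V|\}$ such that the identity map $j\mapsto j$ is a topological ordering. For a DAG $G=(V,E)$ with topological ordering $o$, the induced ordered DAG is $\vec{G}^{(o)} = (\{o(v)\,|\,v\in V\},\{(o(v_j),o(v_k))\,|\,(v_j,v_k)\in E\})$. $\mathrm{ocDAG}$ denotes the set of all ordered and connected DAGs. For a graph $G=(V,E)$ and vertex $v$, the parents are $P_G(v)=\{w\in V\,|\,(w,v)\in E\}$ and the children are $C_G(v)=\{w\in V\,|\,(v,w)\in E\}$. An ECM graph is a connected DAG $G=(V,E)$ whose vertices are partitioned into percepts $\mathcal{S}=\{v\,|\,P_G(v)=\emptyset\}$, actions $\mathcal{A}=\{v\,|\,C_G(v)=\emptyset\}$, and intermediate clips $\mathcal{C}=V\setminus(\mathcal{S}\cup\mathcal{A})$. Given an ECM graph $G=(V,E)$ with topological ordering $o$, a unitary route of $\vec{G}^{(o)}$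 is a sequence of $|V|\times|V|$ unitary matrices $(U^{o(v)})_{v\in\mathcal{C}\cup\mathcal{A}}$, ordered by ascending superscript, whose entries are $U^i_{jk}=u^i_{jk}$ if $j,k\in\{i\}\cup P_{\vec{G}^{(o)}}(i)$ and $U^i_{jk}=\delta_{jk}$ otherwise, where the complex numbers $u^i_{jk}$ are arbitrary subject only to $U^i$ being unitary. The unitary routing $\mathrm{routing}(\vec{G}^{(o)})$ is the set of all unitary routes of $\vec{G}^{(o)}$ (obtained from all admissible choices of the coefficients $u^i_{jk}$). *)

(* Defs.v *)
From HB Require Import structures.
From mathcomp Require Import all_boot all_order all_algebra.
From mathcomp Require Import complex.
From mathcomp Require Import Rstruct.
Set Implicit Arguments. Unset Strict Implicit. Unset Printing Implicit Defensive.
Import Order.TTheory GRing.Theory Num.Theory.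
Local Open Scope ring_scope.

Notation Cplx := (Rdefinitions.R)[i].

(* A directed graph on the vertex set {1,...,n} is encoded on 'I_n
   (vertex k+1 of the paper is the ordinal k); E is its set of directed edges. *)
Definition digraph (n : nat) := {set 'I_n * 'I_n}.

(* identity map is a topological ordering: every edge goes upward *)
Definition is_ordered (n : nat) (E : digraph n) : Prop :=
  forall j k : 'I_n, (j, k) \in E -> (j < k)%N.

Definition is_connected (n : nat) (E : digraph n) : Prop :=
  (0 < n)%N /\
  forall j k : 'I_n, connect (fun a b => ((a, b) \in E) || ((b, a) \in E)) j k.

(* ordered (hence acyclic) connected DAGs, of any size *)
Definition ocDAG : Type :=
  { G : {n : nat & digraph n} | is_ordered (projT2 G) /\ is_connected (projT2 G) }.

Definition ocsize (G : ocDAG) : nat := projT1 (proj1_sig G).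
Definition ocedges (G : ocDAG) : digraph (ocsize G) := projT2 (proj1_sig G).

Definition parents (n : nat) (E : digraph n) (v : 'I_n) : {set 'I_n} :=
  [set w | (w, v) \in E].
Definition children (n : nat) (E : digraph n) (v : 'I_n) : {set 'I_n} :=
  [set w | (v, w) \in E].

Definition percepts (n : nat) (E : digraph n) : {set 'I_n} :=
  [set v | parents E v == set0].
Definition actions (n : nat) (E : digraph n) : {set 'I_n} :=
  [set v | children E v == set0].
Definition clips (n : nat) (E : digraph n) : {set 'I_n} :=
  ~: (percepts E :|: actions E).

Definition adjoint (n : nat) (U : 'M[Cplx]_n) : 'M[Cplx]_n :=
  map_mx Num.conj (U^T).
Definition unitary (n : nat) (U : 'M[Cplx]_n) : Prop :=
  U *m adjoint U = 1%:M.

Definition admissible (n : nat) (E : digraph n) (i : 'I_n) (U : 'M[Cplx]_n) : Prop :=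
  unitary U /\
  forall j k : 'I_n,
    ~~ ((j \in i |: parents E i) && (k \in i |: parents E i)) ->
    U j k = (j == k)%:R.

(* A unitary route is a finite sequence of square complex matrices, all of one
   size m; the size is recorded so that routes of different graphs live in
   one common type. *)
Definition Route : Type := {m : nat & seq 'M[Cplx]_m}.

Definition route_indices (n : nat) (E : digraph n) : seq 'I_n :=
  [seq i <- enum 'I_n | i \in clips E :|: actions E].

Definition routing_of (n : nat) (E : digraph n) : Route -> Prop :=
  fun r => exists Us : 'I_n -> 'M[Cplx]_n,
      (forall i, i \in clips E :|: actions E -> admissible E i (Us i)) /\
      r = existT (fun m => seq 'M[Cplx]_m) n [seq Us i | i <- route_indices E].

Definition routing (G : ocDAG) : Route -> Prop := routing_of (ocedges G).

Definition ocROUTING : Type := { R : Route -> Prop | exists G : ocDAG, R = routing G }.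

Definition router (G : ocDAG) : ocROUTING :=
  exist (fun R => exists G : ocDAG, R = routing G) (routing G) (ex_intro _ G erefl).

(* Main.v *)
Require Import Defs.
From mathcomp Require Import all_boot all_order all_algebra.
From mathcomp Require Import complex Rstruct.
From Stdlib Require Import Eqdep_dec ProofIrrelevance ClassicalEpsilon.
Set Implicit Arguments. Unset Strict Implicit. Unset Printing Implicit Defensive.
Import Order.TTheory GRing.Theory Num.Theory.
Local Open Scope ring_scope.

Definition Dmx n (j : 'I_n) : 'M[Cplx]_n :=
  diag_mx (\row_k (if k == j then -1 else 1)).

Lemma adjoint_diag n (v : 'rV[Cplx]_n) :
  adjoint (diag_mx v) = diag_mx (map_mx Num.conj v).
Proof.
apply/matrixP => a b; rewrite /adjoint !mxE.
case: (eqVneq a b) => [<-|ab]; first by rewrite !mulr1n.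
by rewrite !mulr0n conjC0.
Qed.

Lemma unitary_D n (j : 'I_n) : unitary (Dmx j).
Proof.
rewrite /unitary /Dmx adjoint_diag mulmx_diag.
apply/matrixP => a b; rewrite !mxE.
case: (a == j); by rewrite ?conjCN1 ?conjC1 ?mulrNN mulr1.
Qed.

Lemma unitary_1 n : unitary (1%:M : 'M[Cplx]_n).
Proof.
rewrite /unitary mul1mx; apply/matrixP => a b; rewrite /adjoint !mxE.
by rewrite eq_sym; case: (a == b); rewrite ?conjC1 ?conjC0.
Qed.

Lemma adm_1 n (E : digraph n) i : admissible E i 1%:M.
Proof. split; first exact: unitary_1. by move=> j k _; rewrite mxE. Qed.

Lemma adm_D n (E : digraph n) i j :
  j \in i |: parents E i -> admissible E i (Dmx j).
Proof.
move=> hj; split; first exact: unitary_D.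
move=> a b hab; rewrite /Dmx !mxE.
case: (eqVneq a b) => [eab|]; last by rewrite !mulr0n.
subst b; case: (eqVneq a j) => [eaj|]; last by rewrite !mulr1n.
by subst a; rewrite hj in hab.
Qed.

Definition P n (E : digraph n) (t : nat) (j : 'I_n) : Prop :=
  exists s, routing_of E (existT _ n s) /\ (nth 1%:M s t) j j != 1.

Definition Q n (E : digraph n) (t : nat) (j : 'I_n) : Prop :=
  (t < size (route_indices E))%N /\
  j \in nth j (route_indices E) t |: parents E (nth j (route_indices E) t).

Lemma charP n (E : digraph n) t j : P E t j <-> Q E t j.
Proof.
split.
- move=> [s [[Us [hadm hs]] hne]].
  have {hs} hs := inj_pair2_eq_dec _ PeanoNat.Nat.eq_dec _ _ _ _ hs; subst s.
  case: (ltnP t (size (route_indices E))) => ht; last first.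
    by move: hne; rewrite nth_default ?size_map // mxE eqxx mulr1n eqxx.
  split => //.
  move: hne; rewrite (nth_map j) //.
  set i := nth j _ t.
  have hi : i \in clips E :|: actions E.
    have := mem_nth j ht; rewrite mem_filter => /andP[] //.
  case: (hadm i hi) => _ hk.
  by apply: contraR => hn; rewrite hk ?andbb // eqxx mulr1n eqxx.
- move=> [ht hj].
  exists [seq (if j \in i |: parents E i then Dmx j else 1%:M) | i <- route_indices E].
  split.
    exists (fun i => if j \in i |: parents E i then Dmx j else 1%:M); split => //.
    move=> i _; case: ifP => h; [exact: adm_D | exact: adm_1].
  rewrite (nth_map j) // hj /Dmx !mxE !eqxx mulr1n.
  apply/eqP => h.
  have : (2 : Cplx) == 0 by rewrite -[2]/(1 + 1) -{1}h addNr.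
  by rewrite pnatr_eq0.
Qed.

Lemma mem_ri n (E : digraph n) p i : (p, i) \in E -> i \in route_indices E.
Proof.
move=> h; rewrite mem_filter mem_enum andbT !inE.
case: (boolP (children E i == set0)) => ha; rewrite ?orbT // !orbF.
by apply/negP => /eqP/setP/(_ p); rewrite !inE h.
Qed.

Lemma sub_edges n (E1 E2 : digraph n) :
  is_ordered E1 -> is_ordered E2 ->
  (forall t j, Q E1 t j <-> Q E2 t j) ->
  forall p i, (p, i) \in E1 -> (p, i) \in E2.
Proof.
move=> o1 o2 hQ p i hpi.
have hri := mem_ri hpi.
set t := index i (route_indices E1).
have ht : (t < size (route_indices E1))%N by rewrite index_mem.
have hn : forall x, nth x (route_indices E1) t = i.
  by move=> x; rewrite (set_nth_default i) // nth_index.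
have q1p : Q E1 t p by split => //; rewrite hn !inE hpi orbT.
have q1i : Q E1 t i by split => //; rewrite hn !inE eqxx.
have [ht2 hp2] := (hQ t p).1 q1p.
have [_ hi2] := (hQ t i).1 q1i.
set i' := nth i (route_indices E2) t.
have hn2 : forall x, nth x (route_indices E2) t = i'.
  by move=> x; rewrite (set_nth_default i).
rewrite hn2 in hp2; rewrite hn2 in hi2.
have q2i' : Q E2 t i' by split => //; rewrite hn2 !inE eqxx.
have [_] := (hQ t i').2 q2i'; rewrite hn !inE => hi'.
have eii : i' = i.
  move: hi2 hi'; rewrite !inE => /orP[/eqP //|/o2 h1] /orP[/eqP //|/o1 h2].
  by have := ltn_trans h1 h2; rewrite ltnn.
move: hp2; rewrite eii !inE => /orP[/eqP epi|//].
by have := o1 _ _ hpi; rewrite epi ltnn.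
Qed.

Lemma routing_inj_E n (E1 E2 : digraph n) :
  is_ordered E1 -> is_ordered E2 -> routing_of E1 = routing_of E2 -> E1 = E2.
Proof.
move=> o1 o2 hr.
have hQ : forall t j, Q E1 t j <-> Q E2 t j.
  move=> t j; rewrite -!charP /P hr; split => //.
apply/setP => [[p i]]; apply/idP/idP; first exact: sub_edges.
apply: sub_edges => // t j; by split => /hQ.
Qed.

Lemma routing_id n (E : digraph n) :
  routing_of E (existT _ n [seq 1%:M | i <- route_indices E]).
Proof. exists (fun _ => 1%:M); split => //; move=> i _; exact: adm_1. Qed.

Lemma router_inj : injective routing.
Proof.
move=> [[n1 E1] [o1 c1]] [[n2 E2] [o2 c2]].
rewrite /routing /ocedges /= => hr.
have hn : n1 = n2.
  have := routing_id E1; rewrite hr => -[Us [_ h]].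
  exact: (f_equal (@projT1 _ _) h).
subst n2.
have hE : E1 = E2 := routing_inj_E o1 o2 hr; subst E2.
by rewrite (proof_irrelevance _ (conj o1 c1) (conj o2 c2)).
Qed.

Theorem lemma1 : bijective router.
Proof.
pose g (R : ocROUTING) : ocDAG :=
  proj1_sig (constructive_indefinite_description _ (proj2_sig R)).
exists g.
- move=> G; apply: router_inj; rewrite /g.
  case: constructive_indefinite_description => G' /= h; by rewrite -h.
- move=> [R hR]; rewrite /router /g /=.
  case: constructive_indefinite_description => G' /= h; subst R.
  by rewrite (proof_irrelevance _ (ex_intro _ G' erefl) hR).
Qed.
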